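(* In the qubit–battery model with the ''copy'' interaction $U_{SB}$, let the battery be in the coherent state $|\alpha\rangle_B=e^{-\alpha^2/2}\sum_{n\ge0}\frac{\alpha^n}{\sqrt{n!}}|n\rangle_B$ with $\alpha>0$, whose mean energy is $\langle E\rangle=\omega\alpha^2$. Then, as $\alpha\to\infty$, $$\epsilon_C(\mathbf\Phi_{|\alpha\rangle},\mathcal V)=\frac{|V_{01}|^2}{4\alpha^2}+o(\alpha^{-2})=\frac{\omega|V_{01}|^2}{4\langle E\rangle}+o\big(\langle E\rangle^{-1}\big).$$
   Context: Qubit $S$ with $H_S=\frac\omega2(|1\rangle\langle1|-|0\rangle\langle0|)$; battery $B$ with basis $\{|n\rangle\}_{n\ge0}$ and $H_B=\omega\sum_n n|n\rangle\langle n|$. $V_S$ a qubit unitary, $V_{ij}=\langle i|V_S|j\rangle$, $\mathcal V(\cdot)=V_S\cdot V_S^\dagger$. ''Copy'' interaction: $U_{SB}=|0\rangle\langle0|_S\otimes|0\rangle\langle0|_B+\sum_{n\ge1}\sum_{i,j\in\{0,1\}}V_{ij}|i\rangle\langle j|_S\otimes|n-i\rangle\langle n-j|_B$. Channel $\mathbf\Phi_{|\beta\rangle}(\rho)=\mathrm{Tr}_B[U_{SB}(\rho\otimes|\beta\rangle\langle\beta|)U_{SB}^\dagger]$ with Kraus operators $K^{(n)}={}_B\langle n|U_{SB}|\beta\rangle$; Choi infidelity $\epsilon_C=1-\frac14\sum_n|\mathrm{Tr}[V_S^\dagger K^{(n)}]|^2$. *)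

(* Defs.v *)
From HB Require Import structures.
From mathcomp Require Import all_boot all_order all_algebra.
From mathcomp Require Import complex.
From mathcomp Require Import all_classical all_reals all_analysis.
From mathcomp Require Import zify.
Set Implicit Arguments. Unset Strict Implicit. Unset Printing Implicit Defensive.
Import Order.TTheory GRing.Theory Num.Theory.
Import numFieldNormedType.Exports.
Local Open Scope ring_scope.
Local Open Scope complex_scope.

Section QubitBattery.
Variable R : realType.

Definition sqmod (z : R[i]) : R := (complex.Re z) ^+ 2 + (complex.Im z) ^+ 2.

Definition adjmx (V : 'M[R[i]]_2) : 'M[R[i]]_2 := (map_mx conjc V)^T.

Definition unitary (V : 'M[R[i]]_2) : Prop := adjmx V *m V = 1%:M.

(* amplitudes of the coherent state |alpha> : e^{-a^2/2} a^n / sqrt(n!) *)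
Definition coh (a : R) (n : nat) : R :=
  expR (- (a ^+ 2) / 2) * a ^+ n / Num.sqrt (n`!)%:R.

(* matrix element  <i|_S <m|_B  U_SB  |j>_S |k>_B  of the copy interaction
   U_SB = |0><0| (x) |0><0| + sum_{n>=1} sum_{i,j} V_ij |i><j| (x) |n-i><n-j|.
   The second term contributes iff n := m + i >= 1 and k = n - j. *)
Definition Uel (V : 'M[R[i]]_2) (i : 'I_2) (m : nat) (j : 'I_2) (k : nat) : R[i] :=
  (if [&& i == 0 :> nat, j == 0 :> nat, m == 0 & k == 0] then 1 else 0)
  + (if (0 < m + i)%N && (k + j == m + i)%N then V i j else 0).

Lemma Uel_out V i m j k : (m.+2 <= k)%N -> Uel V i m j k = 0.
Proof.
move=> hk; rewrite /Uel.
have -> : [&& i == 0 :> nat, j == 0 :> nat, m == 0 & k == 0] = false.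
  by apply/negbTE; apply/negP => /and4P [_ _ _ /eqP]; lia.
have -> : (k + j == m + i)%N = false.
  by apply/negbTE/eqP; have := ltn_ord i; have := ltn_ord j; lia.
by rewrite andbF addr0.
Qed.

(* Kraus operator K^{(m)} = <m|_B U_SB |alpha>_B ; the sum over the battery
   basis k is finite since Uel V i m j k = 0 for k >= m+2 (Uel_out). *)
Definition kraus (V : 'M[R[i]]_2) (a : R) (m : nat) : 'M[R[i]]_2 :=
  \matrix_(i, j) \sum_(k < m.+2) Uel V i m j k * (coh a k)%:C.

Definition choi_infid (V : 'M[R[i]]_2) (a : R) : R :=
  1 - 4^-1 * \big[+%R/0%R]_(0 <= n <oo) sqmod (\tr (adjmx V *m kraus V a n)).

End QubitBattery.

(* Main.v *)
Require Import Defs.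
From HB Require Import structures.
From mathcomp Require Import all_boot all_order all_algebra.
From mathcomp Require Import complex.
From mathcomp Require Import all_classical all_reals all_analysis.
From mathcomp Require Import ring lra zify.
Import Order.TTheory GRing.Theory Num.Theory.
Import numFieldNormedType.Exports.
Local Open Scope classical_set_scope.
Local Open Scope ring_scope.

Section S.
Context {R : realType}.
Local Open Scope complex_scope.

Lemma conjc_mulC (z : R[i]) (c : R) : z^* * (z * c%:C) = (sqmod z * c)%:C.
Proof.
case: z => x y; rewrite /sqmod /=.
apply/eqP; rewrite eq_complex /=; apply/andP; split; apply/eqP; ring.
Qed.

Lemma sum_if_eq N k0 (F : nat -> R[i]) : (k0 < N)%N ->
  \sum_(k < N) (if (k:nat) == k0 then F k else 0) = F k0.
Proof.
move=> H; rewrite (bigD1 (Ordinal H)) //= eqxx big1 ?addr0 // => k.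
by move=> /negbTE; rewrite -val_eqE /= => ->.
Qed.

Lemma krausS (V : 'M[R[i]]_2) (a : R) m (i j : 'I_2) :
  kraus V a m.+1 i j = V i j * (coh a (m.+1 + i - j))%:C.
Proof.
rewrite /kraus mxE.
rewrite (eq_bigr (fun k : 'I_(m.+3) => if (k:nat) == (m.+1 + i - j)%N then V i j * (coh a k)%:C else 0)).
  by rewrite (@sum_if_eq _ _ (fun k => V i j * (coh a k)%:C)) //; have := ltn_ord i; have := ltn_ord j; lia.
move=> k _; rewrite /Uel /=.
have -> : (k + j == m.+1 + i)%N = ((k:nat) == (m.+1 + i - j)%N).
  by have := ltn_ord i; have := ltn_ord j; move=> ? ?; apply/idP/idP => /eqP ?; apply/eqP; lia.
by rewrite !andbF add0r; case: ifP => _; rewrite ?mul0r.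
Qed.

Lemma trace_adj (V K : 'M[R[i]]_2) :
  \tr (adjmx V *m K) = (V 0 0)^* * K 0 0 + (V 1 0)^* * K 1 0
     + (V 0 1)^* * K 0 1 + (V 1 1)^* * K 1 1.
Proof.
rewrite /mxtrace !big_ord_recl !big_ord0 !mxE !big_ord_recl !big_ord0 /adjmx !mxE /=.
rewrite !addr0 !addrA.
have -> : lift ord0 ord0 = 1 :> 'I_2 by apply/val_inj.
by [].
Qed.

Lemma traceS (V : 'M[R[i]]_2) (a : R) m :
  \tr (adjmx V *m kraus V a m.+1) =
  ((sqmod (V 0 0) + sqmod (V 1 1)) * coh a m.+1 + sqmod (V 0 1) * coh a m
    + sqmod (V 1 0) * coh a m.+2)%:C.
Proof.
rewrite trace_adj !krausS !conjc_mulC /=.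
have -> : (m.+1 + 0 - 0 = m.+1)%N by lia.
rewrite (modn_small (isT : (1 < 2)%N)) subn0 addnK addn1 addn0 subn1 /=.
apply/eqP; rewrite eq_complex /=; apply/andP; split; apply/eqP; ring.
Qed.


Lemma trace0 (V : 'M[R[i]]_2) (a : R) :
  \tr (adjmx V *m kraus V a 0) =
  (V 0 0)^* * (coh a 0)%:C + (sqmod (V 1 0) * coh a 1 + sqmod (V 1 1) * coh a 0)%:C.
Proof.
rewrite trace_adj /kraus !mxE !big_ord_recl !big_ord0 /Uel /= /bump /=.
rewrite !(add0r, addr0, mul0r, mul1r, mulr0) !conjc_mulC.
by rewrite -addrA -rmorphD.
Qed.

Lemma unitary_facts (V : 'M[R[i]]_2) : unitary V ->
  [/\ sqmod (V 0 0) = 1 - sqmod (V 0 1), sqmod (V 1 1) = 1 - sqmod (V 0 1)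
    & sqmod (V 1 0) = sqmod (V 0 1)].
Proof.
rewrite /unitary => H.
have h00 := congr1 (fun M : 'M[R[i]]_2 => M 0 0) H.
have h11 := congr1 (fun M : 'M[R[i]]_2 => M 1 1) H.
have h01 := congr1 (fun M : 'M[R[i]]_2 => M 0 1) H.
move: h00 h11 h01; rewrite /= /adjmx !mxE !big_ord_recl !big_ord0 !mxE /=.
have -> : lift ord0 ord0 = 1 :> 'I_2 by apply/val_inj.
rewrite /sqmod.
case: (V 0 0) => x0 y0; case: (V 1 0) => x1 y1; case: (V 0 1) => x2 y2;
  case: (V 1 1) => x3 y3 /=.
move=> /(congr1 (@complex.Re R)) /= h00 /(congr1 (@complex.Re R)) /= h11.
move=> h01; have r01 := congr1 (@complex.Re R) h01; have i01 := congr1 (@complex.Im R) h01.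
move: r01 i01 => /= r01 i01.
set u := x0 ^+ 2 + y0 ^+ 2; set v := x2 ^+ 2 + y2 ^+ 2.
set w := x1 ^+ 2 + y1 ^+ 2; set z := x3 ^+ 2 + y3 ^+ 2.
have hu : u + w = 1 by rewrite /u /w -h00; ring.
have hz : v + z = 1 by rewrite /v /z -h11; ring.
have e1 : x0 * x2 + y0 * y2 = - (x1 * x3 + y1 * y3) by apply/eqP; rewrite -subr_eq0 -[X in _ == X]r01; apply/eqP; ring.
have e2 : x0 * y2 - y0 * x2 = - (x1 * y3 - y1 * x3) by apply/eqP; rewrite -subr_eq0 -[X in _ == X]i01; apply/eqP; ring.
have E : u * v = w * z.
  have -> : u * v = (x0 * x2 + y0 * y2) ^+ 2 + (x0 * y2 - y0 * x2) ^+ 2 by rewrite /u /v; ring.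
  rewrite e1 e2 /w /z; ring.
have vw : v = w.
  apply/eqP; rewrite -subr_eq0; apply/eqP.
  have -> : v - w = (u + w) * v - w * (v + z) by rewrite hu hz; ring.
  have -> : (u + w) * v - w * (v + z) = u * v - w * z by ring.
  by rewrite E subrr.
split.
- by rewrite -hu vw; ring.
- by rewrite -hz; ring.
- by rewrite vw.
Qed.


Definition wt (l : R) (n : nat) : R := expR (- l) * (l ^+ n / n`!%:R).
Lemma wt_ge0 (l : R) n : 0 <= l -> 0 <= wt l n.
Proof. by move=> l0; rewrite /wt mulr_ge0 ?expR_ge0 // divr_ge0 // exprn_ge0. Qed.

Definition hasE (l : R) (h : nat -> R) (v : R) :=
  series (fun n => wt l n * h n) @ \oo --> v.

Lemma hasE1 (l : R) : hasE l (fun _ => 1) 1.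
Proof.
rewrite /hasE.
have -> : series (fun n => wt l n * 1) = (fun N => expR (- l) * series (exp_coeff l) N).
  apply/funext => N; rewrite /series /= big_distrr /=; apply: eq_bigr => n _.
  by rewrite mulr1.
have -> : (1 : R) = expR (- l) * expR l by rewrite -expRD addNr expR0.
apply: cvgMl_tmp; rewrite /expR.
exact: (is_cvg_series_exp_coeff l).
Qed.

Lemma hasE_ext l h1 h2 v : (forall n, h1 n = h2 n) -> hasE l h1 v -> hasE l h2 v.
Proof. by move=> e; rewrite /hasE (_ : (fun n => _) = (fun n => wt l n * h2 n)) // ; apply/funext => n; rewrite e. Qed.
Arguments hasE_ext {l h1 h2 v}.
Lemma hasE_eq l h1 h2 v1 v2 : (forall n, h1 n = h2 n) -> v1 = v2 -> hasE l h1 v1 -> hasE l h2 v2.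
Proof. by move=> e <-; apply: hasE_ext. Qed.
Arguments hasE_eq {l h1 h2 v1 v2}.


Lemma hasE_lin l h1 h2 v1 v2 k1 k2 : hasE l h1 v1 -> hasE l h2 v2 ->
  hasE l (fun n => k1 * h1 n + k2 * h2 n) (k1 * v1 + k2 * v2).
Proof.
rewrite /hasE => c1 c2.
have -> : series (fun n => wt l n * (k1 * h1 n + k2 * h2 n)) =
   (fun N => k1 * series (fun n => wt l n * h1 n) N + k2 * series (fun n => wt l n * h2 n) N).
  apply/funext => N; rewrite /series /= !big_distrr -big_split /=; apply: eq_bigr => n _.
  ring.
by apply: cvgD; apply: cvgMl_tmp.
Qed.
Arguments hasE_lin {l h1 h2 v1 v2}.


Lemma hasE_le l h1 h2 v1 v2 : 0 <= l -> hasE l h1 v1 -> hasE l h2 v2 ->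
  (forall n, h1 n <= h2 n) -> v1 <= v2.
Proof.
move=> l0 c1 c2 le; apply: (ler_cvg_to c1 c2); apply: nearW => N.
rewrite /series /=; apply: ler_sum => n _; apply: ler_wpM2l; [exact: wt_ge0|exact: le].
Qed.
Arguments hasE_le {l h1 h2 v1 v2}.


Lemma hasE_ex l h g vg : 0 <= l -> (forall n, 0 <= h n <= g n) -> hasE l g vg ->
  exists v, hasE l h v.
Proof.
move=> l0 hg cg.
have : cvgn (series (fun n => wt l n * h n)).
  apply: (@series_le_cvg _ _ (fun n => wt l n * g n)).
  - by move=> n; rewrite mulr_ge0 ?wt_ge0 //; case/andP: (hg n).
  - by move=> n; rewrite mulr_ge0 ?wt_ge0 //; case/andP: (hg n) => a b; apply: le_trans b.
  - by move=> n; rewrite ler_wpM2l ?wt_ge0 //; case/andP: (hg n).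
  by apply/cvg_ex; exists vg.
by move=> /cvg_ex [v hv]; exists v.
Qed.

Lemma wtS (l : R) n : wt l n.+1 * (n.+1)%:R = l * wt l n.
Proof.
rewrite /wt factS natrM exprS.
have h1 : (n.+1)%:R != 0 :> R by rewrite pnatr_eq0.
have h2 : (n`!)%:R != 0 :> R by rewrite pnatr_eq0 -lt0n fact_gt0.
field; exact/andP.
Qed.

Lemma hasE_shift l h v : hasE l (fun n => h n.+1) v ->
  hasE l (fun n => n%:R * h n) (l * v).
Proof.
rewrite /hasE => c; rewrite -cvg_shiftS.
have -> : [sequence series (fun n => wt l n * (n%:R * h n)) n.+1]_n =
   (fun N => l * series (fun n => wt l n * h n.+1) N).
  apply/funext => N; rewrite /series /= big_nat_recl // mul0r mulr0 add0r.
  rewrite big_distrr /=; apply: eq_bigr => n _.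
  by rewrite mulrA wtS mulrA.
exact: cvgMl_tmp.
Qed.
Arguments hasE_shift {l h v}.


Lemma hasE_ishift l h v : hasE l h v ->
  hasE l (fun n => l / (n.+1)%:R * h n.+1) (v - wt l 0 * h 0).
Proof.
rewrite /hasE => c.
have -> : series (fun n => wt l n * (l / (n.+1)%:R * h n.+1)) =
   (fun N => series (fun n => wt l n * h n) N.+1 - wt l 0 * h 0).
  apply/funext => N; rewrite /series /= big_nat_recl // addrC addKr.
  apply: eq_bigr => n _.
  have h1 : (n.+1)%:R != 0 :> R by rewrite pnatr_eq0.
  have -> : wt l n * (l / (n.+1)%:R * h n.+1) = (l * wt l n) / (n.+1)%:R * h n.+1 by ring.
  by rewrite -(wtS l n) mulfK.
apply: cvgB; last exact: cvg_cst.
by rewrite (cvg_shiftS (fun N => series (fun n => wt l n * h n) N)).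
Qed.
Arguments hasE_ishift {l h v}.


Lemma addn_nz (c : R) n : 0 < c -> c + n%:R != 0.
Proof. move=> c0; apply/eqP => H; have := ler0n R n; lra. Qed.

Lemma wtl0 (l : R) : wt l 0 = expR (- l).
Proof. by rewrite /wt expr0 fact0 divr1 mulr1. Qed.

Lemma hasE_n l : hasE l (fun n => n%:R) l.
Proof.
have := hasE_shift (h := fun _ => 1) (hasE1 l); rewrite mulr1.
by apply: hasE_ext => n; rewrite mulr1.
Qed.

Lemma hasE_n2 l : hasE l (fun n => n%:R ^+ 2) (l ^+ 2 + l).
Proof.
have h : hasE l (fun n => (n.+1)%:R) (l + 1).
  have := hasE_lin 1 1 (hasE_n l) (hasE1 l); rewrite !mul1r.
  by apply: hasE_ext => n /=; rewrite -natr1; ring.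
have := hasE_shift (h := fun n => n%:R) h; rewrite mulrDr mulr1 expr2.
by apply: hasE_ext.
Qed.

Lemma hasE_n3 l : hasE l (fun n => n%:R ^+ 3) (l ^+ 3 + 3 * l ^+ 2 + l).
Proof.
have h : hasE l (fun n => (n.+1)%:R ^+ 2) (l ^+ 2 + 3 * l + 1).
  have := hasE_lin 1 1 (hasE_n2 l) (hasE_lin 2 1 (hasE_n l) (hasE1 l)).
  have -> : 1 * (l ^+ 2 + l) + 1 * (2 * l + 1 * 1) = l ^+ 2 + 3 * l + 1 by ring.
  by apply: hasE_ext => n; rewrite -natr1; ring.
have := hasE_shift (h := fun n => n%:R ^+ 2) h.
have -> : l * (l ^+ 2 + 3 * l + 1) = l ^+ 3 + 3 * l ^+ 2 + l by ring.
by apply: hasE_ext => n; ring.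
Qed.

Lemma hasE_cubic l c0 c1 c2 c3 :
  hasE l (fun n => c0 + c1 * (n.+1)%:R + c2 * (n.+1)%:R ^+ 2 + c3 * (n.+1)%:R ^+ 3)
    (c0 + c1 * (l + 1) + c2 * (l ^+ 2 + 3 * l + 1) + c3 * (l ^+ 3 + 6 * l ^+ 2 + 7 * l + 1)).
Proof.
have h := hasE_lin 1 1 (hasE_lin c0 (c1 + 2 * c2 + 3 * c3) (hasE1 l) (hasE_n l))
              (hasE_lin (c1 + c2 + c3) 1 (hasE1 l) (hasE_lin (c2 + 3 * c3) c3 (hasE_n2 l) (hasE_n3 l))).
move: h; have -> : 1 * (c0 * 1 + (c1 + 2 * c2 + 3 * c3) * l) +
    1 * ((c1 + c2 + c3) * 1 + 1 * ((c2 + 3 * c3) * (l ^+ 2 + l) + c3 * (l ^+ 3 + 3 * l ^+ 2 + l)))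
   = c0 + c1 * (l + 1) + c2 * (l ^+ 2 + 3 * l + 1) + c3 * (l ^+ 3 + 6 * l ^+ 2 + 7 * l + 1) by ring.
by apply: hasE_ext => n; rewrite -natr1; ring.
Qed.

Lemma hasE_inv l : 0 < l -> hasE l (fun n => ((n.+1)%:R)^-1) ((1 - expR (- l)) / l).
Proof.
move=> l0; have ln : l != 0 by rewrite gt_eqF.
apply: (hasE_eq _ _ (hasE_lin (l^-1) 0 (hasE_ishift (hasE1 l)) (hasE1 l))).
  move=> n /=; have a1 : (n.+1)%:R != 0 :> R by rewrite pnatr_eq0.
  by field; rewrite addn_nz // ln.
by rewrite wtl0; field.
Qed.

Lemma hasE_inv2 l : 0 < l ->
  hasE l (fun n => ((n.+1)%:R * (n.+2)%:R)^-1) ((1 - expR (- l) - l * expR (- l)) / l ^+ 2).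
Proof.
move=> l0; have ln : l != 0 by rewrite gt_eqF.
have h1 : hasE l (fun n => l / (n.+1)%:R) (1 - expR (- l)).
  apply: (hasE_eq _ _ (hasE_ishift (hasE1 l))) => [n|]; first by rewrite mulr1.
  by rewrite wtl0 mulr1.
apply: (hasE_eq _ _ (hasE_lin (l^-2) 0 (hasE_ishift h1) (hasE1 l))).
  move=> n /=; have a1 : (n.+1)%:R != 0 :> R by rewrite pnatr_eq0.
  have a2 : (n.+2)%:R != 0 :> R by rewrite pnatr_eq0.
  by field; rewrite !addn_nz // ln.
by rewrite wtl0 divr1; field.
Qed.

Lemma ub_invy (y : R) : 0 < y -> y^-1 <= (15 - 5 * y ^+ 2 + y ^+ 4 + 5 / y ^+ 2) / 16.
Proof.
move=> y0; rewrite -subr_ge0.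
have -> : (15 - 5 * y ^+ 2 + y ^+ 4 + 5 / y ^+ 2) / 16 - y^-1 =
   (y - 1) ^+ 4 * (y ^+ 2 + 4 * y + 5) / (16 * y ^+ 2).
  by field; rewrite gt_eqF.
apply: divr_ge0; last by rewrite mulr_ge0 // exprn_ge0 // ltW.
apply: mulr_ge0; first by rewrite (_ : (y - 1) ^+ 4 = ((y - 1) ^+ 2) ^+ 2) ?sqr_ge0 // -exprM.
by rewrite !addr_ge0 // ?exprn_ge0 ?mulr_ge0 // ltW.
Qed.

Lemma lb_invy (y : R) : 0 < y -> (35 - 35 * y ^+ 2 + 21 * y ^+ 4 - 5 * y ^+ 6) / 16 <= y^-1.
Proof.
move=> y0; rewrite -subr_ge0.
have -> : y^-1 - (35 - 35 * y ^+ 2 + 21 * y ^+ 4 - 5 * y ^+ 6) / 16 =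
   (y - 1) ^+ 4 * (5 * y ^+ 3 + 20 * y ^+ 2 + 29 * y + 16) / (16 * y).
  by field; rewrite gt_eqF.
apply: divr_ge0; last by rewrite mulr_ge0 // ltW.
apply: mulr_ge0; first by rewrite (_ : (y - 1) ^+ 4 = ((y - 1) ^+ 2) ^+ 2) ?sqr_ge0 // -exprM.
by rewrite !addr_ge0 // ?exprn_ge0 ?mulr_ge0 // ltW.
Qed.

Definition yv (a : R) (n : nat) : R := Num.sqrt (n.+1)%:R / a.
Definition rr (a : R) (n : nat) : R := a / Num.sqrt (n.+1)%:R.

Lemma yv_gt0 a n : 0 < a -> 0 < yv a n.
Proof. by move=> a0; rewrite /yv divr_gt0 // sqrtr_gt0 ltr0n. Qed.

Lemma yv2 a n : 0 < a -> yv a n ^+ 2 = (n.+1)%:R / a ^+ 2.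
Proof. by move=> a0; rewrite /yv exprMn sqr_sqrtr // exprVn. Qed.

Lemma rr_yv a n : rr a n = (yv a n)^-1.
Proof. by rewrite /rr /yv invf_div. Qed.

Lemma Er_bounds a : 1 <= a -> exists Er, hasE (a ^+ 2) (rr a) Er /\ (1 / 8 - (a ^+ 2)^-1 <= a ^+ 2 * (1 - Er) <= 1 / 8 + 2 / a ^+ 2).
Proof.
move=> a1; have a0 : 0 < a by apply: lt_le_trans a1.
set l := a ^+ 2.
have l1 : 1 <= l by rewrite /l expr_ge1 // ltW.
have l0 : 0 < l by apply: lt_le_trans l1.
have ln : l != 0 by rewrite gt_eqF.
pose Uf n := (15 - 5 * yv a n ^+ 2 + yv a n ^+ 4 + 5 / yv a n ^+ 2) / 16.
pose Lf n := (35 - 35 * yv a n ^+ 2 + 21 * yv a n ^+ 4 - 5 * yv a n ^+ 6) / 16.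
pose EU := 1 * (15 / 16 + (- 5 / (16 * l)) * (l + 1) + (1 / (16 * l ^+ 2)) * (l ^+ 2 + 3 * l + 1)
              + 0 * (l ^+ 3 + 6 * l ^+ 2 + 7 * l + 1)) + (5 * l / 16) * ((1 - expR (- l)) / l).
pose EL := 35 / 16 + (- 35 / (16 * l)) * (l + 1) + (21 / (16 * l ^+ 2)) * (l ^+ 2 + 3 * l + 1)
              + (- 5 / (16 * l ^+ 3)) * (l ^+ 3 + 6 * l ^+ 2 + 7 * l + 1).
have hU : hasE l Uf EU.
  apply: (hasE_eq _ _ (hasE_lin 1 (5 * l / 16) (hasE_cubic l (15 / 16) (- 5 / (16 * l)) (1 / (16 * l ^+ 2)) 0) (hasE_inv l l0))) => // n.
  have y4 : yv a n ^+ 4 = (yv a n ^+ 2) ^+ 2 by rewrite -exprM.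
  rewrite /Uf y4 yv2 // -/l.
  by field; rewrite ln addn_nz.
have hL : hasE l Lf EL.
  apply: (hasE_eq _ _ (hasE_cubic l (35 / 16) (- 35 / (16 * l)) (21 / (16 * l ^+ 2)) (- 5 / (16 * l ^+ 3)))) => // n.
  have y4 : yv a n ^+ 4 = (yv a n ^+ 2) ^+ 2 by rewrite -exprM.
  have y6 : yv a n ^+ 6 = (yv a n ^+ 2) ^+ 3 by rewrite -exprM.
  rewrite /Lf y4 y6 yv2 // -/l.
  by field.
have [Er hEr] : exists Er, hasE l (rr a) Er.
  apply: (@hasE_ex l (rr a) Uf EU (ltW l0) _ hU) => n; rewrite rr_yv invr_ge0 ltW ?(yv_gt0 a n a0) //=.
  exact: ub_invy (yv_gt0 a n a0).
exists Er; split => //.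
have h1 : Er <= EU by apply: (hasE_le (ltW l0) hEr hU) => n; rewrite rr_yv; exact: ub_invy (yv_gt0 a n a0).
have h2 : EL <= Er by apply: (hasE_le (ltW l0) hL hEr) => n; rewrite rr_yv; exact: lb_invy (yv_gt0 a n a0).
have eU : l * (1 - EU) = 1 / 8 - 1 / (16 * l) + 5 * l * expR (- l) / 16 by rewrite /EU; field.
have eL : l * (1 - EL) = 1 / 8 + 14 / (16 * l) + 5 / (16 * l ^+ 2) by rewrite /EL; field.
have il0 : 0 < l^-1 by rewrite invr_gt0.
have il1 : l^-1 <= 1 by rewrite invf_le1.
have e0 : 0 <= l * expR (- l) by rewrite mulr_ge0 ?expR_ge0 // ltW.
have k1 : 1 / (16 * l) = l^-1 / 16 by field.
have k2 : 14 / (16 * l) = 14 * l^-1 / 16 by field.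
have k3 : 5 / (16 * l ^+ 2) = 5 * (l^-1 * l^-1) / 16 by field.
have k4 : 2 / l = 2 * l^-1 by field.
have m1 : l * (1 - EU) <= l * (1 - Er) by rewrite ler_pM2l // lerD2l lerN2.
have m2 : l * (1 - Er) <= l * (1 - EL) by rewrite ler_pM2l // lerD2l lerN2.
rewrite eU k1 in m1; rewrite eL k2 k3 in m2.
have k5 : l^-1 * l^-1 <= l^-1 by rewrite ger_pMl.
apply/andP; split; nra.
Qed.

Definition ss (a : R) (n : nat) : R := Num.sqrt n%:R / a.

Lemma srt_bounds n :
  1 - 1 / (2 * (n.+1)%:R) - ((n.+1)%:R * (n.+2)%:R)^-1 <= Num.sqrt (n%:R : R) / Num.sqrt (n.+1)%:R
  <= 1 - 1 / (2 * (n.+1)%:R).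
Proof.
set su := Num.sqrt n%:R; set u := Num.sqrt (n.+1)%:R.
have su0 : 0 <= su by apply: sqrtr_ge0.
have u0 : 0 < u by rewrite sqrtr_gt0 ltr0n.
have hsu : su ^+ 2 = n%:R by rewrite sqr_sqrtr // ler0n.
have hu : u ^+ 2 = (n.+1)%:R by rewrite sqr_sqrtr // ler0n.
have hun : (n.+1)%:R = su ^+ 2 + 1 by rewrite hsu -natr1.
have hn2 : (n.+2)%:R = su ^+ 2 + 2 by rewrite hsu -natr1 -natr1; ring.
rewrite -hu hn2.
have un : u != 0 by rewrite gt_eqF.
have hu' : u ^+ 2 = su ^+ 2 + 1 by rewrite hu hun.
apply/andP; split.
- have key : su * (2 * u ^+ 2 + 1) <= 2 * u ^+ 3.
    have h : (su * (2 * u ^+ 2 + 1)) ^+ 2 <= (2 * u ^+ 3) ^+ 2.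
      have -> : (2 * u ^+ 3) ^+ 2 = 4 * (u ^+ 2) ^+ 3 by ring.
      have -> : (su * (2 * u ^+ 2 + 1)) ^+ 2 = su ^+ 2 * (2 * u ^+ 2 + 1) ^+ 2 by ring.
      rewrite hu'; set q := su ^+ 2; have q0 : 0 <= q by rewrite /q sqr_ge0.
      nra.
    have x0 : 0 <= su * (2 * u ^+ 2 + 1) by rewrite mulr_ge0 // addr_ge0 // mulr_ge0 // sqr_ge0.
    have y0 : 0 <= 2 * u ^+ 3 by rewrite mulr_ge0 // exprn_ge0 // ltW.
    nra.
  apply: (@le_trans _ _ (1 - 1 / (2 * u ^+ 2) - 1 / (2 * (u ^+ 2) ^+ 2))).
    rewrite lerD2l lerN2 hu'.
    have q0 : 0 <= su ^+ 2 by rewrite sqr_ge0.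
    set q := su ^+ 2.
    have q1 : q + 1 != 0 by rewrite gt_eqF // ltr_wpDl.
    have q2 : q + 2 != 0 by rewrite gt_eqF // ltr_wpDl.
    rewrite -subr_ge0.
    have -> : ((q + 1) * (q + 2))^-1 - 1 / (2 * (q + 1) ^+ 2) = q / (2 * (q + 1) ^+ 2 * (q + 2)).
      by field; rewrite q1 q2.
    by rewrite divr_ge0 // !mulr_ge0 // ?exprn_ge0 // addr_ge0.
  rewrite -subr_ge0.
  have -> : su / u - (1 - 1 / (2 * u ^+ 2) - 1 / (2 * (u ^+ 2) ^+ 2)) =
    (2 * u ^+ 3 * su - (2 * u ^+ 4 - u ^+ 2 - 1)) / (2 * u ^+ 4).
    by field.
  apply: divr_ge0; last by rewrite mulr_ge0 // exprn_ge0 // ltW.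
  have -> : 2 * u ^+ 4 - u ^+ 2 - 1 = su ^+ 2 * (2 * u ^+ 2 + 1).
    have -> : u ^+ 4 = (u ^+ 2) ^+ 2 by rewrite -exprM.
    by rewrite hu'; ring.
  rewrite subr_ge0.
  have -> : su ^+ 2 * (2 * u ^+ 2 + 1) = su * (su * (2 * u ^+ 2 + 1)) by ring.
  have -> : 2 * u ^+ 3 * su = su * (2 * u ^+ 3) by ring.
  by rewrite ler_wpM2l.
- rewrite -subr_ge0.
  have -> : 1 - 1 / (2 * u ^+ 2) - su / u = (u - su) ^+ 2 / (2 * u ^+ 2).
    have e : (u - su) ^+ 2 = 2 * u ^+ 2 - 1 - 2 * u * su.
      have -> : (u - su) ^+ 2 = u ^+ 2 + su ^+ 2 - 2 * u * su by ring.
      by rewrite hu'; ring.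
    by rewrite e; field.
  by rewrite divr_ge0 ?sqr_ge0 // mulr_ge0 // exprn_ge0 // ltW.
Qed.

Lemma Esr_bounds a : 1 <= a -> exists Es, (hasE (a ^+ 2) (fun n => ss a n * rr a n) Es) /\
  (- expR (- a ^+ 2) <= a ^+ 2 * (1 - Es) - 1 / 2 <= (a ^+ 2)^-1).
Proof.
move=> a1; have a0 : 0 < a by apply: lt_le_trans a1.
have an : a != 0 by rewrite gt_eqF.
set l := a ^+ 2.
have l1 : 1 <= l by rewrite /l expr_ge1 // ltW.
have l0 : 0 < l by apply: lt_le_trans l1.
have ln : l != 0 by rewrite gt_eqF.
set e := expR (- l).
have e0 : 0 <= e by apply: expR_ge0.
have e1 : e <= 1 by rewrite /e -expR0 ler_expR lerNl oppr0 ltW.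
have st n : ss a n * rr a n = Num.sqrt (n%:R : R) / Num.sqrt (n.+1)%:R.
  rewrite /ss /rr; have s1 : Num.sqrt (n.+1)%:R != 0 :> R by rewrite gt_eqF // sqrtr_gt0 ltr0n.
  by field; rewrite an s1.
pose Uf n := 1 - 1 / (2 * (n.+1)%:R) : R.
pose Lf n := 1 - 1 / (2 * (n.+1)%:R) - ((n.+1)%:R * (n.+2)%:R)^-1 : R.
pose EUs := 1 * 1 + (- 1 / 2) * ((1 - e) / l).
pose ELs := 1 * EUs + (- 1) * ((1 - e - l * e) / l ^+ 2).
have hU : hasE l Uf EUs.
  apply: (hasE_eq _ _ (hasE_lin 1 (- 1 / 2) (hasE1 l) (hasE_inv l l0))) => // n.
  by rewrite /Uf; field; rewrite addn_nz.
have hL : hasE l Lf ELs.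
  apply: (hasE_eq _ _ (hasE_lin 1 (- 1) hU (hasE_inv2 l l0))) => // n.
  by rewrite /Lf /Uf; ring.
have [Es hEs] : exists Es, hasE l (fun n => ss a n * rr a n) Es.
  apply: (@hasE_ex l _ (fun _ => 1) 1 (ltW l0) _ (hasE1 l)) => n.
  rewrite st divr_ge0 ?sqrtr_ge0 //=.
  rewrite ler_pdivrMr ?sqrtr_gt0 ?ltr0n // mul1r ler_sqrt ?ltr0n // ler_nat //.
exists Es; split => //.
have h1 : Es <= EUs by apply: (hasE_le (ltW l0) hEs hU) => n; rewrite st; case/andP: (srt_bounds n).
have h2 : ELs <= Es by apply: (hasE_le (ltW l0) hL hEs) => n; rewrite st; case/andP: (srt_bounds n).
have eU : l * (1 - EUs) - 1 / 2 = - e / 2 by rewrite /EUs; field.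
have eL : l * (1 - ELs) - 1 / 2 = - e / 2 + (1 - e - l * e) / l by rewrite /ELs /EUs; field.
have m1 : l * (1 - EUs) <= l * (1 - Es) by rewrite ler_pM2l // lerD2l lerN2.
have m2 : l * (1 - Es) <= l * (1 - ELs) by rewrite ler_pM2l // lerD2l lerN2.
have k1 : (1 - e - l * e) / l = l^-1 - e / l - e by field.
have k2 : 0 <= e / l by rewrite divr_ge0 // ltW.
apply/andP; split.
- lra.
- rewrite k1 in eL; lra.
Qed.

Lemma hasE_ss a Er : 0 < a -> hasE (a ^+ 2) (rr a) Er -> hasE (a ^+ 2) (ss a) Er.
Proof.
move=> a0 h; have an : a != 0 by rewrite gt_eqF.
have ln : a ^+ 2 != 0 by rewrite expf_neq0.
have h1 := hasE_lin ((a ^+ 2)^-1) 0 h (hasE1 (a ^+ 2)).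
have h2 := hasE_shift (h := fun n => (a * Num.sqrt (n%:R : R))^-1) (hasE_ext _ h1).
apply: (hasE_eq _ _ (h2 _)).
- case=> [|n]; first by rewrite /ss sqrtr0 !mul0r.
  rewrite /ss; have s1 : Num.sqrt (n.+1)%:R != 0 :> R by rewrite gt_eqF // sqrtr_gt0 ltr0n.
  rewrite -[X in X * _](sqr_sqrtr (ler0n R n.+1)).
  by field; rewrite s1 an.
- by field.
- move=> n; rewrite /rr; have s1 : Num.sqrt (n.+1)%:R != 0 :> R by rewrite gt_eqF // sqrtr_gt0 ltr0n.
  by field; rewrite s1 an.
Qed.

Lemma hasE_ss2 a : 0 < a -> hasE (a ^+ 2) (fun n => ss a n ^+ 2) 1.
Proof.
move=> a0; have an : a != 0 by rewrite gt_eqF.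
apply: (hasE_eq _ _ (hasE_lin ((a ^+ 2)^-1) 0 (hasE_n (a ^+ 2)) (hasE1 (a ^+ 2)))).
- by move=> n; rewrite /ss exprMn sqr_sqrtr ?ler0n // exprVn; field.
- by field.
Qed.

Lemma hasE_rr2 a : 0 < a -> hasE (a ^+ 2) (fun n => rr a n ^+ 2) (1 - expR (- a ^+ 2)).
Proof.
move=> a0; have an : a != 0 by rewrite gt_eqF.
have l0 : 0 < a ^+ 2 by rewrite exprn_gt0.
apply: (hasE_eq _ _ (hasE_lin (a ^+ 2) 0 (hasE_inv (a ^+ 2) l0) (hasE1 (a ^+ 2)))).
- move=> n; rewrite /rr exprMn exprVn sqr_sqrtr ?ler0n //.
  by field; rewrite addn_nz.
- by field.
Qed.

Lemma coh_ge0 (a : R) n : 0 <= a -> 0 <= coh a n.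
Proof. by move=> a0; rewrite /coh !mulr_ge0 ?expR_ge0 ?invr_ge0 ?sqrtr_ge0 ?exprn_ge0. Qed.

Lemma coh_sq (a : R) n : coh a n ^+ 2 = wt (a ^+ 2) n.
Proof.
rewrite /coh /wt !exprMn exprVn sqr_sqrtr // -expRM_natr.
rewrite -exprM mulnC exprM.
have -> : - a ^+ 2 / 2 * 2 = - a ^+ 2 :> R by rewrite divfK // pnatr_eq0.
by rewrite -exprMn -expr2 -!exprM mulnC; ring.
Qed.

Lemma cohS (a : R) n : coh a n.+1 = coh a n * (a / Num.sqrt (n.+1)%:R).
Proof.
rewrite /coh factS natrM sqrtrM // [a ^+ n.+1]exprS.
have h1 : Num.sqrt (n.+1)%:R != 0 :> R by rewrite sqrtr_eq0 -ltNge ltr0n.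
have h2 : Num.sqrt (n`!)%:R != 0 :> R by rewrite sqrtr_eq0 -ltNge ltr0n fact_gt0.
rewrite invfM; field; exact/andP.
Qed.
End S.

Arguments hasE_ext {R l h1 h2 v}.
Arguments hasE_eq {R l h1 h2 v1 v2}.
Arguments hasE_lin {R l h1 h2 v1 v2}.
Arguments hasE_le {R l h1 h2 v1 v2}.
Arguments hasE_shift {R l h v}.
Arguments hasE_ishift {R l h v}.
Arguments hasE_ss {R a Er}.

Section M.
Variable R : realType.
Local Open Scope complex_scope.

Lemma sqmodC (x : R) : sqmod x%:C = x ^+ 2.
Proof. by rewrite /sqmod /= expr0n addr0. Qed.

Lemma G_succ (V : 'M[R[i]]_2) (a : R) m : unitary V -> 0 < a ->
  sqmod (\tr (adjmx V *m kraus V a m.+1)) =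
  wt (a ^+ 2) m.+1 * (2 * (1 - sqmod (V 0 1)) + sqmod (V 0 1) * (ss a m.+1 + rr a m.+1)) ^+ 2.
Proof.
move=> /unitary_facts [h00 h11 h10] a0.
rewrite traceS sqmodC h00 h11 h10 -coh_sq.
have an : a != 0 by rewrite gt_eqF.
have s1 : Num.sqrt (m.+1)%:R != 0 :> R by rewrite gt_eqF // sqrtr_gt0 ltr0n.
have c2 : coh a m.+2 = coh a m.+1 * rr a m.+1 by rewrite cohS.
have c0 : coh a m = coh a m.+1 * ss a m.+1.
  rewrite cohS /ss; field; by rewrite s1 an.
rewrite c2 c0; ring.
Qed.


Lemma G0_bound (V : 'M[R[i]]_2) (a : R) : unitary V -> 1 <= a ->
  sqmod (\tr (adjmx V *m kraus V a 0)) <= 10 * (a ^+ 2 * expR (- a ^+ 2)).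
Proof.
move=> /unitary_facts [h00 h11 h10] a1; have a0 : 0 < a by apply: lt_le_trans a1.
rewrite trace0 h11 h10.
have p0 : 0 <= sqmod (V 0 1) by rewrite /sqmod addr_ge0 // sqr_ge0.
have q0 : 0 <= 1 - sqmod (V 0 1) by rewrite -h00 /sqmod addr_ge0 // sqr_ge0.
have hc0 := coh_sq a 0; have hc1 := coh_sq a 1.
rewrite wtl0 in hc0; rewrite /wt expr1 (_ : 1`! = 1)%N // divr1 in hc1.
have g0 := coh_ge0 a 0 (ltW a0); have g1 := coh_ge0 a 1 (ltW a0).
set c0 := coh a 0 in hc0 g0 *; set c1 := coh a 1 in hc1 g1 *.
set p := sqmod (V 0 1) in p0 q0 h00 *.
move: h00; rewrite /sqmod; case: (V 0 0) => x y /= hxy.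
have e0 : 0 <= expR (- a ^+ 2) by apply: expR_ge0.
have l1 : 1 <= a ^+ 2 by rewrite expr_ge1 // ltW.
set e := expR (- a ^+ 2) in e0 hc0 hc1 *; set l := a ^+ 2 in l1 hc1 *.
rewrite /sqmod /=.
have hx : x ^+ 2 <= 1 by nra.
have hy : y ^+ 2 <= 1 by nra.
have p1 : p <= 1 by lra.
set X := x * c0 - - y * 0 + (p * c1 + (1 - p) * c0).
have hX : X = x * c0 + p * c1 + (1 - p) * c0 by rewrite /X; ring.
have s3 : forall A B C : R, (A + B + C) ^+ 2 <= 3 * (A ^+ 2 + B ^+ 2 + C ^+ 2).
  move=> A B C; rewrite -subr_ge0.
  have -> : 3 * (A ^+ 2 + B ^+ 2 + C ^+ 2) - (A + B + C) ^+ 2 =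
    (A - B) ^+ 2 + (B - C) ^+ 2 + (A - C) ^+ 2 by ring.
  by rewrite !addr_ge0 // sqr_ge0.
have el0 : 0 <= e * l by rewrite mulr_ge0 // (le_trans _ l1).
have pp : p ^+ 2 <= 1 by nra.
have qq : (1 - p) ^+ 2 <= 1 by nra.
have t1 : (x * c0) ^+ 2 <= e by rewrite exprMn hc0 -[X in _ <= X]mul1r ler_wpM2r.
have t2 : (p * c1) ^+ 2 <= e * l by rewrite exprMn hc1 -[X in _ <= X]mul1r ler_wpM2r.
have t3 : ((1 - p) * c0) ^+ 2 <= e by rewrite exprMn hc0 -[X in _ <= X]mul1r ler_wpM2r.
have t4 : (x * 0 + - y * c0 + 0) ^+ 2 <= e.
  have -> : (x * 0 + - y * c0 + 0) ^+ 2 = y ^+ 2 * c0 ^+ 2 by ring.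
  by rewrite hc0 -[X in _ <= X]mul1r ler_wpM2r.
have := s3 (x * c0) (p * c1) ((1 - p) * c0); rewrite -hX.
have el : e <= e * l by nra.
nra.
Qed.


Lemma hasE_F (a p Er Es : R) : 0 < a -> hasE (a ^+ 2) (rr a) Er ->
  hasE (a ^+ 2) (fun n => ss a n * rr a n) Es ->
  hasE (a ^+ 2) (fun n => (2 * (1 - p) + p * (ss a n + rr a n)) ^+ 2)
    (4 * (1 - p) ^+ 2 + 8 * p * (1 - p) * Er + p ^+ 2 * (2 - expR (- a ^+ 2)) + 2 * p ^+ 2 * Es).
Proof.
move=> a0 hr hs.
have A1 := hasE_lin (4 * (1 - p) ^+ 2) (4 * p * (1 - p)) (hasE1 (a ^+ 2)) (hasE_ss a0 hr).
have A2 := hasE_lin 1 (4 * p * (1 - p)) A1 hr.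
have A3 := hasE_lin 1 (p ^+ 2) A2 (hasE_ss2 a a0).
have A4 := hasE_lin 1 (p ^+ 2) A3 (hasE_rr2 a a0).
have A5 := hasE_lin 1 (2 * p ^+ 2) A4 hs.
apply: (hasE_eq _ _ A5) => [n|]; ring.
Qed.

Lemma l3e (l : R) : 0 <= l -> l ^+ 3 * expR (- l) <= 6.
Proof.
move=> l0; have := expR_ge1Dxn 2 l0.
rewrite (_ : 3`! = 6)%N // expRN => h.
have E0 : 0 < expR l by apply: expR_gt0.
rewrite -(ler_pM2r E0) -mulrA mulVf ?gt_eqF // mulr1.
have : l ^+ 3 / 6 <= expR l by lra.
by rewrite ler_pdivrMr // mulrC.
Qed.


Lemma choi_eq (V : 'M[R[i]]_2) (a EF : R) : unitary V -> 0 < a ->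
  hasE (a ^+ 2) (fun n => (2 * (1 - sqmod (V 0 1)) + sqmod (V 0 1) * (ss a n + rr a n)) ^+ 2) EF ->
  choi_infid V a = 1 - 4^-1 * (sqmod (\tr (adjmx V *m kraus V a 0))
     - expR (- a ^+ 2) * (2 * (1 - sqmod (V 0 1)) + sqmod (V 0 1) * (ss a 0 + rr a 0)) ^+ 2 + EF).
Proof.
move=> U a0 hF.
set G := fun n => sqmod (\tr (adjmx V *m kraus V a n)).
set F := fun n => (2 * (1 - sqmod (V 0 1)) + sqmod (V 0 1) * (ss a n + rr a n)) ^+ 2.
have HG : series G @ \oo --> G 0 - expR (- a ^+ 2) * F 0 + EF.
  rewrite -cvg_shiftS.
  have -> : [sequence series G n.+1]_n = (fun N => (G 0 - expR (- a ^+ 2) * F 0) +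
       series (fun n => wt (a ^+ 2) n * F n) N.+1).
    apply/funext => N; rewrite /series /= big_nat_recl // [in RHS]big_nat_recl //.
    rewrite wtl0 addrA subrK; congr (_ + _); apply: eq_bigr => n _.
    by rewrite /G G_succ.
  apply: cvgD; first exact: cvg_cst.
  by rewrite (cvg_shiftS (fun N => series (fun n => wt (a ^+ 2) n * F n) N)).
rewrite /choi_infid; congr (_ - _ * _).
exact: (cvg_lim _ HG).
Qed.


Lemma X_bound (V : 'M[R[i]]_2) (a : R) : unitary V -> 1 <= a ->
  `|(choi_infid V a - sqmod (V 0 1) / (4 * a ^+ 2)) / (a ^+ 2)^-1| <= 40 / a ^+ 2.
Proof.
move=> U a1; have a0 : 0 < a by apply: lt_le_trans a1.
have [Er [hEr bEr]] := Er_bounds a a1.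
have [Es [hEs bEs]] := Esr_bounds a a1.
have hF := @hasE_F a (sqmod (V 0 1)) Er Es a0 hEr hEs.
rewrite (choi_eq V a _ U a0 hF).
have G0b := G0_bound V a U a1.
have G00 : 0 <= sqmod (\tr (adjmx V *m kraus V a 0)) by rewrite /sqmod addr_ge0 // sqr_ge0.
have [h00 h11 h10] := unitary_facts V U.
have p0 : 0 <= sqmod (V 0 1) by rewrite /sqmod addr_ge0 // sqr_ge0.
have q0 : 0 <= 1 - sqmod (V 0 1) by rewrite -h00 /sqmod addr_ge0 // sqr_ge0.
have ss0 : ss a 0 = 0 by rewrite /ss sqrtr0 mul0r.
have rr0 : rr a 0 = a by rewrite /rr sqrtr1 divr1.
rewrite ss0 rr0 add0r.
set G0 := sqmod _ in G0b G00 *.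
set p := sqmod (V 0 1) in p0 q0 *.
have l1 : 1 <= a ^+ 2 by rewrite expr_ge1 // ltW.
have l0 : 0 < a ^+ 2 by apply: lt_le_trans l1.
have ae : a <= a ^+ 2 by rewrite expr2; nra.
have L3 := l3e _ (ltW l0).
set e := expR (- a ^+ 2) in bEs L3 G0b *.
have e0 : 0 <= e by apply: expR_ge0.
set l := a ^+ 2 in bEr bEs L3 G0b l1 l0 ae *.
have ln : l != 0 by rewrite gt_eqF.
set il := l^-1 in bEr bEs *.
have il0 : 0 < il by rewrite invr_gt0.
have lil : l * il = 1 by rewrite mulfV.
set E2 := l ^+ 2 * e.
have hE2 : E2 <= 6 * il.
  have -> : E2 = (l ^+ 3 * e) * il by rewrite /E2 /il; field.
  by rewrite ler_wpM2r // ltW.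
have E20 : 0 <= E2 by rewrite mulr_ge0 // sqr_ge0.
have hle : l * e <= E2 by rewrite /E2 expr2 -mulrA ler_peMl // mulr_ge0 // ltW.
have hel : e <= l * e by rewrite ler_peMl.
have le0 : 0 <= l * e by rewrite mulr_ge0 // ltW.
have F0b : (2 * (1 - p) + p * a) ^+ 2 <= 9 * l.
  have h1 : 0 <= 2 * (1 - p) + p * a by rewrite addr_ge0 // mulr_ge0 // ltW.
  have h2 : 2 * (1 - p) + p * a <= 3 * a by nra.
  have : (2 * (1 - p) + p * a) ^+ 2 <= (3 * a) ^+ 2 by nra.
  by rewrite /l; lra.
have F00 : 0 <= (2 * (1 - p) + p * a) ^+ 2 by apply: sqr_ge0.
set F0 := (2 * (1 - p) + p * a) ^+ 2 in F0b F00 *.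
set A1 := l * (1 - Er) - 1 / 8.
set A2 := l * (1 - Es) - 1 / 2.
have eq4 : 4 * ((1 - 4^-1 * (G0 - e * F0 +
      (4 * (1 - p) ^+ 2 + 8 * p * (1 - p) * Er + p ^+ 2 * (2 - e) + 2 * p ^+ 2 * Es)) -
        p / (4 * l)) / il)
   = 8 * (p * (1 - p)) * A1 + 2 * p ^+ 2 * A2 + p ^+ 2 * (l * e) - l * G0 + (l * e) * F0.
  by rewrite /A1 /A2 /il; field.
have hA1 : - il <= A1 <= 2 * il.
  by rewrite /A1; move: bEr; rewrite /il; lra.
have hA2 : - (6 * il) <= A2 <= 6 * il.
  have : e <= 6 * il by lra.
  by rewrite /A2; move: bEs; lra.
have pq0 : 0 <= p * (1 - p) by rewrite mulr_ge0.
have pq1 : p * (1 - p) <= 1 by nra.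
have pp0 : 0 <= p ^+ 2 by apply: sqr_ge0.
have pp1 : p ^+ 2 <= 1 by nra.
have P1 : - (16 * il) <= 8 * (p * (1 - p)) * A1 <= 16 * il.
  case/andP: hA1 => ? ?; apply/andP; split; nra.
have P2 : - (12 * il) <= 2 * p ^+ 2 * A2 <= 12 * il.
  case/andP: hA2 => ? ?; apply/andP; split; nra.
have P3 : 0 <= p ^+ 2 * (l * e) <= 6 * il.
  apply/andP; split; first by rewrite mulr_ge0.
  nra.
have P4 : 0 <= l * G0 <= 60 * il.
  apply/andP; split; first by rewrite mulr_ge0 // ltW.
  have : l * G0 <= l * (10 * (l * e)) by rewrite ler_pM2l.
  have -> : l * (10 * (l * e)) = 10 * E2 by rewrite /E2; ring.
  lra.
have P5 : 0 <= (l * e) * F0 <= 54 * il.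
  apply/andP; split; first by rewrite mulr_ge0.
  have : (l * e) * F0 <= (l * e) * (9 * l) by rewrite ler_wpM2l.
  have -> : (l * e) * (9 * l) = 9 * E2 by rewrite /E2; ring.
  lra.
set X := (_ / il).
rewrite ler_norml.
move: eq4; rewrite -/X => eq4.
case/andP: P1 => ? ?; case/andP: P2 => ? ?; case/andP: P3 => ? ?;
case/andP: P4 => ? ?; case/andP: P5 => ? ?.
apply/andP; split; lra.
Qed.


Lemma cvg0_of_bound (f : R -> R) (K : R) : 0 < K ->
  (forall a, 1 <= a -> `|f a| <= K / a ^+ 2) -> f a @[a --> +oo] --> (0 : R).
Proof.
move=> K0 hb; apply/cvgrPdist_lt => eps eps0.
near=> a.
have a1 : 1 <= a by near: a; apply: nbhs_pinfty_ge; rewrite num_real.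
have aK : K / eps < a by near: a; apply: nbhs_pinfty_gt; rewrite num_real.
rewrite sub0r normrN; apply: le_lt_trans (hb a a1) _.
have a0 : 0 < a by apply: lt_le_trans a1.
rewrite ltr_pdivrMr ?exprn_gt0 //.
rewrite ltr_pdivrMr // in aK.
have : a <= a ^+ 2 by rewrite expr2; nra.
nra.
Unshelve. all: by end_near.
Qed.

End M.

Theorem mainTheorem9 (R : realType) (V : 'M[R[i]]_2) (omega : R) :
  unitary V -> 0 < omega ->
  ((choi_infid V a - sqmod (V 0 1) / (4 * a ^+ 2)) / (a ^+ 2)^-1
     @[a --> +oo] --> (0 : R))
  /\
  ((choi_infid V a - omega * sqmod (V 0 1) / (4 * (omega * a ^+ 2)))
     / (omega * a ^+ 2)^-1
     @[a --> +oo] --> (0 : R)).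
Proof.
move=> U w0; split.
  apply: (@cvg0_of_bound R _ 40) => // a a1.
  exact: X_bound.
apply: (@cvg0_of_bound R _ (omega * 40)); first by rewrite mulr_gt0.
move=> a a1; have a0 : 0 < a by apply: lt_le_trans a1.
have an : a != 0 by rewrite gt_eqF.
have wn : omega != 0 by rewrite gt_eqF.
have -> : (choi_infid V a - omega * sqmod (V 0 1) / (4 * (omega * a ^+ 2))) / (omega * a ^+ 2)^-1
   = omega * ((choi_infid V a - sqmod (V 0 1) / (4 * a ^+ 2)) / (a ^+ 2)^-1).
  by field; rewrite an wn.
rewrite normrM gtr0_norm // -mulrA ler_pM2l //.
exact: X_bound.
Qed.
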